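(* (Principal specialization.) Let $0\le m\le n$, $x=(x_1,\dots,x_m)$, and let $y=(1,t,\dots,t^{n-1})$. Then \[F(t^{n-m+1};x,y;t)=\prod_{i=1}^m\frac{1-t^{i+n-m}}{1-t^nx_i}\quad\text{and}\quad F(1;x,y;t)=t^{\binom m2}x_1\cdots x_m\prod_{i=1}^m\frac{1-t^{i+n-m}}{1-t^nx_i}.\]
   Context: For $x=(x_1,\dots,x_m)$, $y=(y_1,\dots,y_n)$, \[F(u;x,y;t)=\sum_{I\subseteq\{1,\dots,m\}}(-u)^{|I|}t^{\binom{|I|}{2}}\prod_{i\in I,\ j\in\{1,\dots,m\}\setminus I}\frac{tx_i-x_j}{x_i-x_j}\prod_{i\in I}\prod_{j=1}^n\frac{1-x_iy_j}{1-tx_iy_j}.\] *)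

(* Defs.v *)
From HB Require Import structures.
From mathcomp Require Import all_boot all_order all_algebra.
Set Implicit Arguments. Unset Strict Implicit. Unset Printing Implicit Defensive.
Import Order.TTheory GRing.Theory Num.Theory.
Local Open Scope ring_scope.

(* F(u; x, y; t) for x = (x_1..x_m), y = (y_1..y_n), values in a field R.
   Indices are 0-based ('I_m, 'I_n); the subset I ranges over {set 'I_m}. *)
Definition Ffun (R : fieldType) (m n : nat) (u : R) (x : 'I_m -> R)
    (y : 'I_n -> R) (t : R) : R :=
  \sum_(I : {set 'I_m})
    (- u) ^+ #|I| * t ^+ 'C(#|I|, 2)
    * (\prod_(i in I) \prod_(j in ~: I) ((t * x i - x j) / (x i - x j)))
    * (\prod_(i in I) \prod_(j < n) ((1 - x i * y j) / (1 - t * x i * y j))).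

(* Main.v *)
Require Import Defs.
From HB Require Import structures.
From mathcomp Require Import all_boot all_order all_algebra.
From mathcomp Require Import ring zify.
Set Implicit Arguments. Unset Strict Implicit. Unset Printing Implicit Defensive.
Import Order.TTheory GRing.Theory Num.Theory.
Local Open Scope ring_scope.
Section Dg.
Variable (R : fieldType).

Definition dg (p : {poly R}) (n : nat) (l : R) := (size p <= n.+1)%N /\ p`_n = l.

Lemma dg0 n : dg 0 n 0.
Proof. by split; rewrite ?size_poly0 ?coef0. Qed.

Lemma dgD p q n l l' : dg p n l -> dg q n l' -> dg (p + q) n (l + l').
Proof.
move=> [sp cp] [sq cq]; split; last by rewrite coefD cp cq.
by apply: leq_trans (size_polyD _ _) _; rewrite geq_max sp sq.
Qed.

Lemma dgZ a p n l : dg p n l -> dg (a *: p) n (a * l).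
Proof.
move=> [sp cp]; split; last by rewrite coefZ cp.
exact: leq_trans (size_scale_leq _ _) sp.
Qed.

Lemma dgM p q n k l l' : dg p n l -> dg q k l' -> dg (p * q) (n + k) (l * l').
Proof.
move=> [sp cp] [sq cq]; split.
  apply: leq_trans (size_polyMleq _ _) _.
  move: sp sq; rewrite -!subn1; lia.
rewrite coefM (bigD1 (@Ordinal (n + k).+1 n (leq_addr k n))) //= addKn cp cq.
rewrite big1 ?addr0 // => j /eqP/val_eqP /= jn.
case: (ltngtP j n) jn => // [jlt|jgt] _.
  rewrite [q`_ _]nth_default ?mulr0 //; apply: leq_trans sq _.
  have := ltn_ord j; move: jlt; lia.
by rewrite nth_default ?mul0r //; apply: leq_trans sp _.
Qed.

Lemma dg_eq p n n' l : n = n' -> dg p n l -> dg p n' l.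
Proof. by move=> ->. Qed.

Lemma dg_lin u v : dg (u *: 'X + v%:P) 1 u.
Proof.
rewrite -mul_polyC; split.
  rewrite size_MXaddC; case: ifP => // _; by rewrite ltnS size_polyC leq_b1.
by rewrite coefD coefMX coefC /= coefC addr0.
Qed.

Lemma dg_XsubC y : dg ('X - y%:P) 1 1.
Proof. by have := dg_lin 1 (- y); rewrite scale1r polyCN. Qed.

Lemma dg_ZXsubC u y : dg (u *: 'X - y%:P) 1 u.
Proof. by have := dg_lin u (- y); rewrite polyCN. Qed.

Lemma dg_1subZX u : dg (1 - u *: 'X) 1 (- u).
Proof. by have := dg_lin (- u) 1; rewrite polyC1 scaleNr addrC. Qed.

Lemma dg_prod (T : finType) (A : {pred T}) (F : T -> {poly R}) (l : T -> R) :
  (forall i, dg (F i) 1 (l i)) -> dg (\prod_(i in A) F i) #|A| (\prod_(i in A) l i).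
Proof.
move=> H; rewrite -!big_enum /= cardE; elim: (enum A) => [|i r IH].
  by rewrite !big_nil; split; rewrite ?size_poly1 // coefC.
rewrite !big_cons /=; exact: dgM (H i) IH.
Qed.


Lemma dgB p q n l l' : dg p n l -> dg q n l' -> dg (p - q) n (l - l').
Proof.
move=> [sp cp] [sq cq]; split; last by rewrite coefB cp cq.
by apply: leq_trans (size_polyD _ _) _; rewrite size_polyN geq_max sp sq.
Qed.

Lemma dg_up p n l : dg p n l -> dg p n.+1 0.
Proof.
move=> [sp _]; split; first exact: leq_trans sp _.
by rewrite nth_default.
Qed.

Lemma dg_size p n : dg p n.+1 0 -> (size p <= n.+1)%N.
Proof.
move=> [sp cp]; apply/leq_sizeP => j; rewrite leq_eqVlt => /orP[/eqP <-//|].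
by move=> h; rewrite nth_default //; exact: leq_trans sp h.
Qed.

End Dg.

Section Main.
Variables (R : fieldType) (T : finType) (t : R).

Definition Fp (x : T -> R) i j := (t * x i - x j) / (x i - x j).
Definition Aset x (S I : {set T}) := \prod_(i in I) \prod_(j in S :\: I) Fp x i j.
Definition Wt x (S : {set T}) (c b : R) (I : {set T}) :=
  c ^+ #|I| * t ^+ 'C(#|I|, 2) * Aset x S I * \prod_(i in I) (1 - x i)
  * \prod_(j in S :\: I) (1 - b * x j).
Definition Phi x (S : {set T}) (c b : R) := \sum_(I : {set T} | I \subset S) Wt x S c b I.

Lemma sum_split (a : T) (S : {set T}) (f : {set T} -> R) : a \notin S ->
  \sum_(I : {set T} | I \subset a |: S) f I =
  \sum_(I : {set T} | I \subset S) (f I + f (a |: I)).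
Proof.
move=> aS; rewrite big_split /= [LHS](bigID (fun I : {set T} => a \in I)) /= addrC; congr (_ + _).
  apply: eq_bigl => I; apply/idP/idP.
    case/andP=> /subsetP H aI; apply/subsetP => i iI.
    have := H i iI; rewrite !inE; case/orP=> // /eqP ei; by move: iI; rewrite ei (negbTE aI).
  move=> /subsetP H; apply/andP; split; last by apply/negP => /H; rewrite (negbTE aS).
  by apply/subsetP => i /H iS; rewrite !inE iS orbT.
rewrite (reindex_onto (fun I => a |: I) (fun I => I :\ a)) /=; last first.
  by move=> I /andP[_ aI]; rewrite setD1K.
apply: eq_bigl => I; rewrite setU11 andbT; apply/idP/idP.
  case/andP => /subsetP H /eqP E; apply/subsetP => i iI.
  have : i \in a |: S by apply: H; rewrite !inE iI orbT.
  rewrite !inE; case/orP => // /eqP ei; move: iI; rewrite -E ei !inE eqxx //.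
move=> /subsetP H; apply/andP; split.
  apply/subsetP => i; rewrite !inE; case/orP => [->//|/H ->]; by rewrite orbT.
rewrite setU1K //; apply/negP => /H; by rewrite (negbTE aS).
Qed.


Lemma setD_U1 (a : T) (S I : {set T}) : a \notin I ->
  (a |: S) :\: I = a |: (S :\: I).
Proof.
move=> aI; apply/setP => j; rewrite !inE; case: (eqVneq j a) => [->|] //=.
by rewrite (negbTE aI).
Qed.

Lemma setU1_D (a : T) (S I : {set T}) : a \notin S ->
  (a |: S) :\: (a |: I) = S :\: I.
Proof.
move=> aS; apply/setP => j; rewrite !inE; case: (eqVneq j a) => [->|] //=.
by rewrite (negbTE aS) andbF.
Qed.

Lemma binS2 k : 'C(k.+1, 2) = ('C(k, 2) + k)%N.
Proof. by rewrite binS bin1. Qed.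

Lemma Wt_split0 x a (S I : {set T}) c b : a \notin S -> I \subset S ->
  Wt x (a |: S) c b I = Wt x S c b I * ((1 - b * x a) * \prod_(i in I) Fp x i a).
Proof.
move=> aS IS; have aI : a \notin I by apply/negP => /(subsetP IS); rewrite (negbTE aS).
have aSI : a \notin S :\: I by rewrite inE (negbTE aS) andbF.
rewrite /Wt /Aset setD_U1 // big_setU1 //=.
under eq_bigr => i _ do rewrite big_setU1 //=.
rewrite big_split /=; ring.
Qed.

Lemma Wt_split1 x a (S I : {set T}) c b : a \notin S -> I \subset S ->
  Wt x (a |: S) c b (a |: I) =
  Wt x S c b I * (c * t ^+ #|I| * (1 - x a) * \prod_(j in S :\: I) Fp x a j).
Proof.
move=> aS IS; have aI : a \notin I by apply/negP => /(subsetP IS); rewrite (negbTE aS).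
rewrite /Wt /Aset setU1_D // cardsU1 aI add1n binS2 exprD exprS !big_setU1 //=; ring.
Qed.

Lemma Phi_split x a (S : {set T}) c b : a \notin S ->
  Phi x (a |: S) c b = \sum_(I : {set T} | I \subset S) Wt x S c b I *
    ((1 - b * x a) * \prod_(i in I) Fp x i a
     + c * t ^+ #|I| * (1 - x a) * \prod_(j in S :\: I) Fp x a j).
Proof.
move=> aS; rewrite /Phi sum_split //; apply: eq_bigr => I IS.
rewrite Wt_split0 // Wt_split1 //; ring.
Qed.


Lemma Phi_zero x a (S : {set T}) c b : a \notin S -> x a = 0 ->
  (forall j, j \in S -> x j != 0) ->
  Phi x (a |: S) c b = (1 + c) * Phi x S (c * t) b.
Proof.
move=> aS xa0 nz; rewrite Phi_split // /Phi mulr_sumr; apply: eq_bigr => I IS.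
have -> : \prod_(i in I) Fp x i a = t ^+ #|I|.
  rewrite -prodr_const; apply: eq_bigr => i iI.
  rewrite /Fp xa0 !subr0 -mulrA divff ?mulr1 //; exact: nz (subsetP IS i iI).
have -> : \prod_(j in S :\: I) Fp x a j = 1.
  apply: big1 => j; rewrite inE => /andP[_ jS].
  by rewrite /Fp xa0 mulr0 divff // sub0r oppr_eq0 nz.
rewrite /Wt xa0 exprMn; ring.
Qed.


Definition Vp x (S : {set T}) : {poly R} := \prod_(j in S) ('X - (x j)%:P).
Definition Brk x (S : {set T}) (c b : R) (I : {set T}) : {poly R} :=
  (1 - b *: 'X) * \prod_(i in I) ('X - (t * x i)%:P)
    * \prod_(j in S :\: I) ('X - (x j)%:P)
  + (c * t ^+ #|I|) *: ((1 - 'X) * \prod_(i in I) ('X - (x i)%:P)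
    * \prod_(j in S :\: I) (t *: 'X - (x j)%:P)).
Definition Pol x (S : {set T}) (c b : R) : {poly R} :=
  \sum_(I : {set T} | I \subset S) Wt x S c b I *: Brk x S c b I.

Lemma Brk_val x (S I : {set T}) c b z :
  (Brk x S c b I).[z] =
  (1 - b * z) * \prod_(i in I) (z - t * x i) * \prod_(j in S :\: I) (z - x j)
  + c * t ^+ #|I| * ((1 - z) * \prod_(i in I) (z - x i)
    * \prod_(j in S :\: I) (t * z - x j)).
Proof.
rewrite /Brk hornerD hornerZ !hornerM !horner_prod.
rewrite !hornerE /=.
under eq_bigr => i _ do rewrite hornerXsubC.
have E1 : forall A : {set T}, \prod_(i in A) ('X - (x i)%:P).[z] = \prod_(i in A) (z - x i).
  by move=> A; apply: eq_bigr => i _; rewrite hornerXsubC.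
have E2 : forall A : {set T}, \prod_(i in A) (t *: 'X - (x i)%:P).[z] = \prod_(i in A) (t * z - x i).
  by move=> A; apply: eq_bigr => i _; rewrite !hornerE.
by rewrite !E1 E2.
Qed.


Lemma Fp_prod_l x a (I : {set T}) : (forall i, i \in I -> x i != x a) ->
  \prod_(i in I) Fp x i a * \prod_(i in I) (x a - x i) =
  \prod_(i in I) (x a - t * x i).
Proof.
move=> H; rewrite -big_split /=; apply: eq_bigr => i iI.
have : x i - x a != 0 by rewrite subr_eq0 H.
move=> nz; rewrite /Fp; field; exact: nz.
Qed.

Lemma Fp_prod_r x a (I : {set T}) : (forall i, i \in I -> x i != x a) ->
  \prod_(i in I) Fp x a i * \prod_(i in I) (x a - x i) =
  \prod_(i in I) (t * x a - x i).
Proof.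
move=> H; rewrite -big_split /=; apply: eq_bigr => i iI.
have : x a - x i != 0 by rewrite subr_eq0 eq_sym H.
move=> nz; rewrite /Fp; field; exact: nz.
Qed.

Lemma Pol_val x a (S : {set T}) c b : a \notin S ->
  (forall j, j \in S -> x j != x a) ->
  Phi x (a |: S) c b * (Vp x S).[x a] = (Pol x S c b).[x a].
Proof.
move=> aS H; rewrite Phi_split // mulr_suml /Pol horner_sum; apply: eq_bigr => I IS.
rewrite hornerZ Brk_val /Vp horner_prod.
have E1 : forall A : {set T}, \prod_(i in A) ('X - (x i)%:P).[x a] = \prod_(i in A) (x a - x i).
  by move=> A; apply: eq_bigr => i _; rewrite hornerXsubC.
rewrite E1.
rewrite [\prod_(i in S) _](big_setID I) /= (setIidPr IS).
have HI : forall i, i \in I -> x i != x a by move=> i /(subsetP IS); apply: H.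
have HJ : forall i, i \in S :\: I -> x i != x a.
  by move=> i; rewrite inE => /andP[_]; apply: H.
rewrite -(Fp_prod_l HI) -(Fp_prod_r HJ); ring.
Qed.


Lemma Pol_root x k (S : {set T}) c b : k \in S -> {in S &, injective x} ->
  (Pol x S c b).[x k] = 0.
Proof.
move=> kS inj; set S0 := S :\ k.
have kS0 : k \notin S0 by rewrite /S0 setD11.
have ES : S = k |: S0 by rewrite /S0 setD1K.
have nk : forall i, i \in S0 -> x i != x k.
  move=> i; rewrite /S0 !inE => /andP[ik iS]; apply/negP => /eqP E.
  by move: ik; rewrite (inj _ _ iS kS E) eqxx.
rewrite /Pol horner_sum ES sum_split // big1 // => I IS0.
have kI : k \notin I by apply/negP => /(subsetP IS0); rewrite (negbTE kS0).
set J := S0 :\: I.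
have kJ : k \notin J by rewrite /J inE (negbTE kS0) andbF.
have HI : forall i, i \in I -> x i != x k by move=> i /(subsetP IS0); apply: nk.
have HJ : forall i, i \in J -> x i != x k.
  by move=> i; rewrite /J inE => /andP[_]; apply: nk.
rewrite !hornerZ !Brk_val Wt_split0 // Wt_split1 // setD_U1 // setU1_D //.
rewrite -/J !big_setU1 //= cardsU1 kI add1n.
rewrite -(Fp_prod_l HI) -(Fp_prod_r HJ) exprS; ring.
Qed.


Lemma Brk_dg x (S I : {set T}) c b : I \subset S ->
  dg (Brk x S c b I) #|S|.+1 (- (b + c * t ^+ #|S|)).
Proof.
move=> IS.
have cS : (#|I| + #|S :\: I|)%N = #|S|.
  by rewrite -[in RHS](cardsID I S) (setIidPr IS).
have e : ((1 + #|I|) + #|S :\: I|)%N = #|S|.+1 by rewrite -addnA cS add1n.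
have d1 := dgM (dgM (dg_1subZX b) (dg_prod I (fun i => dg_XsubC (t * x i))))
   (dg_prod (S :\: I) (fun j => dg_XsubC (x j))).
have h1 : dg (1 - 'X : {poly R}) 1 (-1) by have := dg_1subZX (1 : R); rewrite scale1r.
have d2 := dgZ (c * t ^+ #|I|) (dgM (dgM h1 (dg_prod I (fun i => dg_XsubC (x i))))
   (dg_prod (S :\: I) (fun j => dg_ZXsubC t (x j)))).
have := dgD (dg_eq e d1) (dg_eq e d2).
rewrite !big1_eq prodr_const -cS exprD; congr dg; ring.
Qed.

Lemma Pol_dg x (S : {set T}) c b :
  dg (Pol x S c b) #|S|.+1 (- (b + c * t ^+ #|S|) * Phi x S c b).
Proof.
rewrite /Pol /Phi mulr_sumr.
apply: (big_ind2 (fun p l => dg p #|S|.+1 l)); first exact: dg0.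
  by move=> p1 l1 p2 l2; apply: dgD.
by move=> I IS; rewrite mulrC; apply: dgZ; apply: Brk_dg.
Qed.


Lemma Wt_congr x x' (S I : {set T}) c b : I \subset S ->
  {in S, x =1 x'} -> Wt x S c b I = Wt x' S c b I.
Proof.
move=> IS E.
have EI : forall i, i \in I -> x i = x' i by move=> i /(subsetP IS) /E.
have EJ : forall i, i \in S :\: I -> x i = x' i.
  by move=> i; rewrite inE => /andP[_] /E.
rewrite /Wt /Aset.
under eq_bigr => i iI do under eq_bigr => j jJ do rewrite /Fp (EI i iI) (EJ j jJ).
under [\prod_(i in I) (1 - _)]eq_bigr => i iI do rewrite (EI i iI).
by under [\prod_(j in S :\: I) (1 - _)]eq_bigr => j jJ do rewrite (EJ j jJ).
Qed.

Lemma Phi_congr x x' (S : {set T}) c b :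
  {in S, x =1 x'} -> Phi x S c b = Phi x' S c b.
Proof. by move=> E; apply: eq_bigr => I IS; apply: Wt_congr. Qed.

Lemma Vp_congr x x' (S : {set T}) : {in S, x =1 x'} -> Vp x S = Vp x' S.
Proof. by move=> E; apply: eq_bigr => i iS; rewrite E. Qed.

Lemma Pol_congr x x' (S : {set T}) c b :
  {in S, x =1 x'} -> Pol x S c b = Pol x' S c b.
Proof.
move=> E; apply: eq_bigr => I IS; rewrite (@Wt_congr x x' S I c b IS E); congr (_ *: _).
have EI : forall i, i \in I -> x i = x' i by move=> i /(subsetP IS) /E.
have EJ : forall i, i \in S :\: I -> x i = x' i.
  by move=> i; rewrite inE => /andP[_] /E.
rewrite /Brk.
have -> : \prod_(i in I) ('X - (t * x i)%:P) = \prod_(i in I) ('X - (t * x' i)%:P).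
  by apply: eq_bigr => i iI; rewrite EI.
have -> : \prod_(i in I) ('X - (x i)%:P) = \prod_(i in I) ('X - (x' i)%:P).
  by apply: eq_bigr => i iI; rewrite EI.
have -> : \prod_(i in S :\: I) ('X - (x i)%:P) = \prod_(i in S :\: I) ('X - (x' i)%:P).
  by apply: eq_bigr => i iI; rewrite EJ.
have -> : \prod_(i in S :\: I) (t *: 'X - (x i)%:P) = \prod_(i in S :\: I) (t *: 'X - (x' i)%:P).
  by apply: eq_bigr => i iI; rewrite EJ.
by [].
Qed.

Lemma Phi0 x c b : Phi x set0 c b = 1.
Proof.
rewrite /Phi (big_pred1 set0); last by move=> I; rewrite subset0.
by rewrite /Wt /Aset cards0 setD0 !big_set0 expr0 !mulr1.
Qed.

Lemma Vp_root x (S : {set T}) j : j \in S -> (Vp x S).[x j] = 0.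
Proof.
by move=> jS; rewrite /Vp horner_prod (bigD1 j) //= hornerXsubC subrr mul0r.
Qed.

Lemma Vp_neq0 x (S : {set T}) z : (forall j, j \in S -> x j != z) ->
  (Vp x S).[z] != 0.
Proof.
move=> H; rewrite /Vp horner_prod; apply/prodf_neq0 => j jS.
by rewrite hornerXsubC subr_eq0 eq_sym H.
Qed.


Lemma prod_step (s : R) n :
  (1 + - s) * \prod_(i < n) (1 - s * t * t ^+ i) = \prod_(i < n.+1) (1 - s * t ^+ i).
Proof.
rewrite big_ord_recl /= expr0 mulr1; congr (_ * _).
by apply: eq_bigr => i _; rewrite /bump /= add1n exprS mulrA.
Qed.

Lemma claim1 n : forall (S : {set T}) x s b, #|S| = n -> {in S &, injective x} ->
  ((0 < #|S|)%N -> b = s * t ^+ #|S|.-1) ->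
  Phi x S (- s) b = \prod_(i < #|S|) (1 - s * t ^+ i).
Proof.
elim: n => [|n IH] S x s b cS inj hb.
  by move/eqP: cS; rewrite cards_eq0 => /eqP ->; rewrite Phi0 cards0 big_ord0.
have /set0Pn[a0 a0S] : S != set0 by rewrite -card_gt0 cS.
have hb' : b = s * t ^+ n by rewrite hb cS.
have key : forall a, a \in S -> 
  let S0 := S :\ a in
  [/\ a \notin S0, S = a |: S0, #|S0| = n & {in S0 &, injective x}].
  move=> a aS S0; split; first by rewrite setD11.
  - by rewrite setD1K.
  - by move: cS; rewrite (cardsD1 a S) aS add1n => -[].
  - by move=> i j /setD1P[_ iS] /setD1P[_ jS]; apply: inj.
case: (boolP [exists a in S, x a == 0]) => [/existsP[a /andP[aS /eqP xa]] | nz0].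
  have [aS0 ES cS0 inj0] := key a aS.
  have nz : forall j, j \in S :\ a -> x j != 0.
    move=> j /setD1P[ja jS]; apply/negP => /eqP xj.
    by move: ja; rewrite (inj _ _ jS aS (etrans xj (esym xa))) eqxx.
  rewrite {1}ES Phi_zero // mulNr (IH _ x (s * t) b cS0 inj0).
    by rewrite cS0 cS prod_step.
  move=> n0; rewrite hb' cS0 -mulrA -exprS prednK //; by rewrite -cS0.
have nzS : forall j, j \in S -> x j != 0.
  move=> j jS; apply/negP => xj; move/negP: nz0; apply; apply/existsP.
  by exists j; rewrite jS xj.
have [aS0 ES cS0 inj0] := key a0 a0S.
set S0 := S :\ a0 in aS0 ES cS0 inj0 *.
have nzS0 : forall j, j \in S0 -> x j != 0.
  by move=> j /setD1P[_ jS]; apply: nzS.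
have nea : forall j, j \in S0 -> x j != x a0.
  move=> j /setD1P[ja jS]; apply/negP => /eqP E.
  by move: ja; rewrite (inj _ _ jS a0S E) eqxx.
set P := \prod_(i < #|S|) (1 - s * t ^+ i).
have hD : Pol x S0 (- s) b - P *: Vp x S0 = 0.
  apply: (@roots_geq_poly_eq0 _ _ (0 :: [seq x j | j <- enum S0])).
  - rewrite /= ; apply/andP; split.
      rewrite /root hornerD hornerN hornerZ subr_eq0; apply/eqP.
      pose x0 := fun j => if j == a0 then 0 else x j.
      have E0 : {in S0, x =1 x0}.
        by move=> j /setD1P[ja _]; rewrite /x0 (negbTE ja).
      have x0a : x0 a0 = 0 by rewrite /x0 eqxx.
      have H0 : forall j, j \in S0 -> x0 j != x0 a0.
        by move=> j jS0; rewrite -E0 // x0a nzS0.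
      have V := Pol_val (x := x0) (- s) b aS0 H0.
      rewrite x0a in V.
      rewrite (Pol_congr _ _ E0) -V (Vp_congr E0) Phi_zero //; last first.
        by move=> j jS0; rewrite -E0 // nzS0.
      rewrite -(Phi_congr _ _ E0) mulNr (IH _ x (s * t) b cS0 inj0).
        by rewrite cS0 /P cS prod_step.
      move=> n0; rewrite hb' cS0 -mulrA -exprS prednK //; by rewrite -cS0.
    apply/allP => z /mapP[j]; rewrite mem_enum => jS0 ->.
    by rewrite /root hornerD hornerN hornerZ Pol_root // Vp_root // mulr0 subrr.
  - rewrite /=; apply/andP; split.
      apply/mapP => -[j]; rewrite mem_enum => jS0 ej.
      by move: (nzS0 j jS0); rewrite -ej eqxx.
    rewrite map_inj_in_uniq ?enum_uniq // => i j; rewrite !mem_enum; apply: inj0.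
  - rewrite /= size_map -cardE; apply: dg_size.
    have := dgB (Pol_dg x S0 (- s) b) (dg_up (dgZ P (dg_prod S0 (fun j => dg_XsubC (x j))))).
    rewrite hb' cS0 => h.
    have e : (- (s * t ^+ n + - s * t ^+ n) * Phi x S0 (- s) (s * t ^+ n) - 0) = 0 by ring.
    by rewrite e in h.
have := Pol_val (- s) b aS0 nea.
rewrite (subr0_eq hD) hornerZ -ES => /mulIf; apply; exact: Vp_neq0.
Qed.


Lemma claim2 n : forall (S : {set T}) x b, #|S| = n -> {in S &, injective x} ->
  Phi x S (- 1) b = (\prod_(i in S) x i) * \prod_(i < #|S|) (t ^+ i - b).
Proof.
elim: n => [|n IH] S x b cS inj.
  by move/eqP: cS; rewrite cards_eq0 => /eqP ->; rewrite Phi0 cards0 big_ord0 big_set0 mulr1.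
have /set0Pn[a0 a0S] : S != set0 by rewrite -card_gt0 cS.
have key : forall a, a \in S ->
  let S0 := S :\ a in
  [/\ a \notin S0, S = a |: S0, #|S0| = n & {in S0 &, injective x}].
  move=> a aS S0; split; first by rewrite setD11.
  - by rewrite setD1K.
  - by move: cS; rewrite (cardsD1 a S) aS add1n => -[].
  - by move=> i j /setD1P[_ iS] /setD1P[_ jS]; apply: inj.
case: (boolP [exists a in S, x a == 0]) => [/existsP[a /andP[aS /eqP xa]] | nz0].
  have [aS0 ES cS0 inj0] := key a aS.
  have nz : forall j, j \in S :\ a -> x j != 0.
    move=> j /setD1P[ja jS]; apply/negP => /eqP xj.
    by move: ja; rewrite (inj _ _ jS aS (etrans xj (esym xa))) eqxx.
  by rewrite {1}ES Phi_zero // subrr mul0r (big_setD1 a aS) /= xa !mul0r.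
have nzS : forall j, j \in S -> x j != 0.
  move=> j jS; apply/negP => xj; move/negP: nz0; apply; apply/existsP.
  by exists j; rewrite jS xj.
have [aS0 ES cS0 inj0] := key a0 a0S.
set S0 := S :\ a0 in aS0 ES cS0 inj0 *.
have nzS0 : forall j, j \in S0 -> x j != 0.
  by move=> j /setD1P[_ jS]; apply: nzS.
have nea : forall j, j \in S0 -> x j != x a0.
  move=> j /setD1P[ja jS]; apply/negP => /eqP E.
  by move: ja; rewrite (inj _ _ jS a0S E) eqxx.
set K := \prod_(i in S0) x i * \prod_(i < #|S|) (t ^+ i - b).
have hX : dg ('X : {poly R}) 1 1 by have := dg_lin (1 : R) 0; rewrite scale1r polyC0 addr0.
have hD : Pol x S0 (- 1) b - K *: ('X * Vp x S0) = 0.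
  apply: (@roots_geq_poly_eq0 _ _ (0 :: [seq x j | j <- enum S0])).
  - rewrite /= ; apply/andP; split.
      rewrite /root hornerD hornerN hornerZ hornerM hornerX mul0r mulr0 subr0.
      pose x0 := fun j => if j == a0 then 0 else x j.
      have E0 : {in S0, x =1 x0}.
        by move=> j /setD1P[ja _]; rewrite /x0 (negbTE ja).
      have x0a : x0 a0 = 0 by rewrite /x0 eqxx.
      have H0 : forall j, j \in S0 -> x0 j != x0 a0.
        by move=> j jS0; rewrite -E0 // x0a nzS0.
      have V := Pol_val (x := x0) (- 1) b aS0 H0.
      rewrite x0a in V.
      rewrite (Pol_congr _ _ E0) -V Phi_zero ?subrr ?mul0r //.
      by move=> j jS0; rewrite -E0 // nzS0.
    apply/allP => z /mapP[j]; rewrite mem_enum => jS0 ->.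
    by rewrite /root hornerD hornerN hornerZ hornerM Pol_root // Vp_root // !mulr0 subrr.
  - rewrite /=; apply/andP; split.
      apply/mapP => -[j]; rewrite mem_enum => jS0 ej.
      by move: (nzS0 j jS0); rewrite -ej eqxx.
    rewrite map_inj_in_uniq ?enum_uniq // => i j; rewrite !mem_enum; apply: inj0.
  - rewrite /= size_map -cardE; apply: dg_size.
    have := dgB (Pol_dg x S0 (- 1) b)
      (dgZ K (dg_eq (add1n _) (dgM hX (dg_prod S0 (fun j => dg_XsubC (x j)))))).
    rewrite (IH _ x b cS0 inj0) cS0 /K cS big_ord_recr /= big1_eq => h.
    have e : (- (b + - 1 * t ^+ n) *
       (\prod_(i in S0) x i * \prod_(i < n) (t ^+ i - b)) -
       \prod_(i in S0) x i * (\prod_(i < n) (t ^+ i - b) * (t ^+ n - b)) * (1 * 1)) = 0.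
      by ring.
    by rewrite e in h.
have := Pol_val (- 1) b aS0 nea.
rewrite (subr0_eq hD) hornerZ hornerM hornerX -ES mulrA => /mulIf h.
rewrite h; last exact: Vp_neq0.
by rewrite /K (big_setD1 a0 a0S) /= -/S0; ring.
Qed.


End Main.

Lemma prod_rev (R : fieldType) (t : R) m n : (m <= n)%N ->
  \prod_(i < m) (t ^+ i - t ^+ n) = t ^+ 'C(m, 2) * \prod_(i < m) (1 - t ^+ (i.+1 + n - m)).
Proof.
move=> mn.
have -> : \prod_(i < m) (t ^+ i - t ^+ n) = \prod_(i < m) (t ^+ i * (1 - t ^+ (n - i))).
  apply: eq_bigr => i _; rewrite mulrBr mulr1 -exprD subnKC //.
  exact: ltnW (leq_trans (ltn_ord i) mn).
rewrite big_split /= prodrXr.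
have -> : (\sum_(i < m) (i : nat))%N = 'C(m, 2) by rewrite -bin2_sum big_mkord.
congr (_ * _); rewrite (reindex_inj rev_ord_inj) /=; apply: eq_bigr => i _.
have := ltn_ord i; move=> hi; congr (_ - _ ^+ _); lia.
Qed.

Lemma tele (R : fieldType) (t z : R) k :
  (forall j, (j <= k)%N -> 1 - t * z * t ^+ j != 0) ->
  \prod_(j < k.+1) ((1 - z * t ^+ j) / (1 - t * z * t ^+ j)) = (1 - z) / (1 - t ^+ k.+1 * z).
Proof.
elim: k => [|k IH] H.
  by rewrite big_ord1 /= !expr0 !mulr1 expr1.
rewrite big_ord_recr /= IH; last by move=> j jk; apply: H; exact: leqW.
have h1 := H k (leqnSn k). have h2 := H k.+1 (leqnn _).
have e1 : 1 - t ^+ k.+1 * z = 1 - t * z * t ^+ k by rewrite exprS; ring.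
have e2 : 1 - t ^+ k.+2 * z = 1 - t * z * t ^+ k.+1 by rewrite exprS; ring.
rewrite e1 e2 exprS; field.
by rewrite -exprS h2 h1.
Qed.

Theorem corollary3p3 (R : fieldType) (m n : nat) (x : 'I_m -> R) (t : R) :
  (m <= n)%N ->
  injective x ->
  (forall (i : 'I_m) (j : 'I_n), 1 - t * x i * t ^+ j != 0) ->
  let y := fun j : 'I_n => t ^+ j in
  let P := \prod_(i < m) ((1 - t ^+ (i.+1 + n - m)) / (1 - t ^+ n * x i)) in
  Ffun (t ^+ (n - m).+1) x y t = P /\
  Ffun 1 x y t = t ^+ 'C(m, 2) * (\prod_(i < m) x i) * P.
Proof.
move=> mn inj Hd y P.
have Hd' : forall (i : 'I_m) (j : nat), (j < n)%N -> 1 - t * x i * t ^+ j != 0.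
  by move=> i j jn; exact: (Hd i (Ordinal jn)).
pose h i := 1 - t ^+ n * x i.
have n0 : forall i : 'I_m, (0 < n)%N.
  by move=> i; apply: leq_trans mn; exact: (leq_ltn_trans (leq0n i) (ltn_ord i)).
have hnz : forall i : 'I_m, h i != 0.
  move=> i; have h0 : (n.-1 < n)%N by rewrite prednK ?(n0 i).
  have := Hd' i n.-1 h0.
  have e : 1 - t * x i * t ^+ n.-1 = h i.
    by rewrite /h -{2}(prednK (n0 i)) exprS; ring.
  by rewrite e.
have telI : forall i : 'I_m,
    \prod_(j < n) ((1 - x i * y j) / (1 - t * x i * y j)) = (1 - x i) / h i.
  move=> i; have [n' en] : exists n', n = n'.+1 by exists n.-1; rewrite prednK ?(n0 i).
  rewrite /y /h; move: Hd'; rewrite en => Hd''.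
  by rewrite tele // => j jn; apply: Hd''; rewrite ltnS.
pose Qd := \prod_(i < m) h i.
have Qnz : Qd != 0 by apply/prodf_neq0 => i _.
have FQ : forall u, Ffun u x y t * Qd = Phi t x [set: 'I_m] (- u) (t ^+ n).
  move=> u; rewrite /Ffun /Phi mulr_suml.
  rewrite [RHS](eq_bigl (fun _ => true)); last by move=> I; rewrite subsetT.
  apply: eq_bigr => I _.
  have -> : \prod_(i in I) \prod_(j < n) ((1 - x i * y j) / (1 - t * x i * y j))
      = \prod_(i in I) ((1 - x i) / h i) by apply: eq_bigr => i _; exact: telI.
  rewrite /Wt /Aset setTD /Fp [Qd](bigID (fun i => i \in I)) /=.
  have e1 : \prod_(i < m | i \notin I) h i = \prod_(j in ~: I) (1 - t ^+ n * x j).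
    by apply: eq_bigl => j; rewrite inE.
  have e2 : \prod_(i in I) ((1 - x i) / h i) * \prod_(i in I) h i = \prod_(i in I) (1 - x i).
    by rewrite -big_split /=; apply: eq_bigr => i _; rewrite divfK.
  rewrite e1 -e2; ring.
have hb : (0 < #|[set: 'I_m]|)%N ->
    t ^+ n = t ^+ (n - m).+1 * t ^+ #|[set: 'I_m]|.-1.
  rewrite cardsT card_ord => m0; rewrite -exprD; congr (_ ^+ _); lia.
have cS : #|[set: 'I_m]| = m by rewrite cardsT card_ord.
have c1 := @claim1 R 'I_m t m [set: 'I_m] x (t ^+ (n - m).+1) (t ^+ n)
  cS (in2W inj) hb.
have c2 := @claim2 R 'I_m t m [set: 'I_m] x (t ^+ n) cS (in2W inj).
have PQ : P * Qd = \prod_(i < m) (1 - t ^+ (i.+1 + n - m)).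
  by rewrite /P /Qd -big_split /=; apply: eq_bigr => i _; rewrite divfK //; exact: hnz.
split.
  apply: (mulIf Qnz); rewrite FQ c1 PQ cardsT card_ord.
  apply: eq_bigr => i _; rewrite -exprD; congr (_ - _ ^+ _).
  have := ltn_ord i; lia.
apply: (mulIf Qnz); rewrite FQ c2 -!mulrA PQ cardsT card_ord prod_rev //.
have -> : \prod_(i in [set: 'I_m]) x i = \prod_(i < m) x i.
  by apply: eq_bigl => i; rewrite inE.
ring.
Qed.
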